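(* For integers $n\ge0$ and $s,r\ge2$, $$\sum_{a+b=n}\zeta^\star(\{s\}^a)\,\zeta(sb+r)=\sum_{a+b=n}\zeta^\star(\{s\}^a,r,\{s\}^b),$$ the sums being over nonnegative integers $a,b$ with $a+b=n$.
   Context: $\zeta^\star(\alpha_1,\ldots,\alpha_k)=\sum_{1\le k_1\le\cdots\le k_k}k_1^{-\alpha_1}\cdots k_k^{-\alpha_k}$, with the convention $\zeta^\star(\{s\}^0)=1$; $\{s\}^a$ denotes $a$ repetitions of $s$; $\zeta$ is the Riemann zeta function. *)

(* Defs.v *)
From Stdlib Require Import Reals List.
From Coquelicot Require Import Coquelicot.
Open Scope R_scope.

(* zstar_trunc m N l = sum over m <= k_1 <= ... <= k_len <= N of
   k_1^{-l_1} ... k_len^{-l_len}   (empty sum-product = 1). *)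
Fixpoint zstar_trunc (m N : nat) (l : list nat) : R :=
  match l with
  | nil => 1
  | a :: l' =>
      sum_n_m (fun j => / (INR j) ^ a * zstar_trunc j N l') m N
  end.

Definition zeta_star (l : list nat) : R :=
  real (Lim_seq (fun N => zstar_trunc 1 N l)).

Definition riemann_zeta (s : nat) : R :=
  Series (fun k => / (INR (S k)) ^ s).

Definition rep (a s : nat) : list nat := repeat s a.

(* Main.v *)
Require Import Defs.
From Stdlib Require Import Reals List Lia Lra Arith.
From Coquelicot Require Import Coquelicot.
Open Scope R_scope.

Lemma sml (c : R) (f : nat -> R) n m :
  sum_n_m (fun k => c * f k) n m = c * sum_n_m f n m.
Proof. exact (sum_n_m_mult_l (K:=R_Ring) c f n m). Qed.
Lemma smr (c : R) (f : nat -> R) n m :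
  sum_n_m (fun k => f k * c) n m = sum_n_m f n m * c.
Proof. exact (sum_n_m_mult_r (K:=R_Ring) c f n m). Qed.
Lemma smp (f g : nat -> R) n m :
  sum_n_m (fun k => f k + g k) n m = sum_n_m f n m + sum_n_m g n m.
Proof. exact (sum_n_m_plus (G:=R_AbelianMonoid) f g n m). Qed.
Lemma smz (f : nat -> R) n m : (m < n)%nat -> sum_n_m f n m = 0.
Proof. intros; exact (sum_n_m_zero (G:=R_AbelianMonoid) f n m H). Qed.
Lemma smSm (f : nat -> R) n m : (n <= S m)%nat ->
  sum_n_m f n (S m) = sum_n_m f n m + f (S m).
Proof. intros; exact (sum_n_Sm (G:=R_AbelianMonoid) f n m H). Qed.
Lemma smSn (f : nat -> R) n m : (n <= m)%nat ->
  sum_n_m f n m = f n + sum_n_m f (S n) m.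
Proof. intros; exact (sum_Sn_m (G:=R_AbelianMonoid) f n m H). Qed.
Lemma smnn (f : nat -> R) n : sum_n_m f n n = f n.
Proof. exact (sum_n_n (G:=R_AbelianMonoid) f n). Qed.
Lemma smC (f : nat -> R) n m k : (n <= S m)%nat -> (m <= k)%nat ->
  sum_n_m f n k = sum_n_m f n m + sum_n_m f (S m) k.
Proof. intros; exact (sum_n_m_Chasles (G:=R_AbelianMonoid) f n m k H H0). Qed.
Lemma smS (f : nat -> R) n m :
  sum_n_m (fun k => f (S k)) n m = sum_n_m f (S n) (S m).
Proof. exact (sum_n_m_S (G:=R_AbelianMonoid) f n m). Qed.
Lemma smext (f g : nat -> R) n m :
  (forall k, (n <= k <= m)%nat -> f k = g k) -> sum_n_m f n m = sum_n_m g n m.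
Proof. exact (sum_n_m_ext_loc (G:=R_AbelianMonoid) f g n m). Qed.

Lemma sn0 (f : nat -> R) : sum_n f 0%nat = f 0%nat.
Proof. unfold sum_n. apply smnn. Qed.
Lemma snS (f : nat -> R) n : sum_n f (S n) = sum_n f n + f (S n).
Proof. unfold sum_n. apply smSm. lia. Qed.
Lemma snSl (f : nat -> R) n : sum_n f (S n) = f 0%nat + sum_n (fun a => f (S a)) n.
Proof. unfold sum_n. rewrite smSn by lia. now rewrite smS. Qed.

Lemma sum_swap (f : nat -> nat -> R) n a b :
  sum_n (fun i => sum_n_m (fun j => f i j) a b) n =
  sum_n_m (fun j => sum_n (fun i => f i j) n) a b.
Proof.
  induction n.
  - rewrite sn0. apply smext. intros; now rewrite sn0.
  - rewrite snS, IHn, <- smp. apply smext. intros; now rewrite snS.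
Qed.

Lemma tri (f : nat -> nat -> R) m N :
  sum_n_m (fun i => sum_n_m (fun j => f i j) i N) m N =
  sum_n_m (fun j => sum_n_m (fun i => f i j) m j) m N.
Proof.
  induction N.
  - destruct m.
    + rewrite !smnn. reflexivity.
    + rewrite !smz by lia. reflexivity.
  - destruct (le_lt_dec m (S N)).
    + rewrite (smext (fun i => sum_n_m (fun j => f i j) i (S N))
                     (fun i => sum_n_m (fun j => f i j) i N + f i (S N))).
      2:{ intros. apply smSm. lia. }
      rewrite smp, smSm by lia. rewrite (smz _ (S N) N) by lia.
      rewrite IHN. rewrite (smSm _ m N) by lia. rewrite (smSm (fun j => sum_n_m (fun i => f i j) m j) m N) by lia. rewrite (smSm (fun i => f i (S N)) m N) by lia. lra.
    + rewrite (smz _ m (S N)), (smz _ m (S N)); [reflexivity|lia..].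
Qed.

Lemma zconcat x l2 l1 : forall m N,
  zstar_trunc m N (l1 ++ x :: l2) =
  sum_n_m (fun j => zstar_trunc m j l1 * (/ INR j ^ x * zstar_trunc j N l2)) m N.
Proof.
  induction l1 as [|y l1 IH]; intros m N.
  - simpl. apply smext. intros; lra.
  - simpl.
    rewrite (smext _ (fun i => sum_n_m (fun j => / INR i ^ y * zstar_trunc i j l1 *
                (/ INR j ^ x * zstar_trunc j N l2)) i N)).
    2:{ intros. rewrite IH, <- sml. apply smext. intros; lra. }
    rewrite (tri (fun i j => / INR i ^ y * zstar_trunc i j l1 *
                (/ INR j ^ x * zstar_trunc j N l2))).
    apply smext. intros. now rewrite smr.
Qed.

Lemma Erec s b m N : (m <= N)%nat ->
  zstar_trunc m N (rep (S b) s) =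
  / INR m ^ s * zstar_trunc m N (rep b s) + zstar_trunc (S m) N (rep (S b) s).
Proof. intros. simpl. now rewrite smSn. Qed.

Lemma split_id s m N : (m <= N)%nat -> forall n L, (L <= S m)%nat ->
  sum_n (fun a => zstar_trunc L m (rep a s) * zstar_trunc (S m) N (rep (n - a) s)) n
  = zstar_trunc L N (rep n s).
Proof.
  intros HmN n. induction n; intros L HL.
  - rewrite sn0. simpl. lra.
  - rewrite snSl.
    change (zstar_trunc L N (rep (S n) s)) with
      (sum_n_m (fun j => / INR j ^ s * zstar_trunc j N (rep n s)) L N).
    rewrite (smC _ L m N) by lia.
    change (zstar_trunc L m (rep 0 s)) with 1.
    replace (S n - 0)%nat with (S n) by lia.
    rewrite (smext (fun j => / INR j ^ s * zstar_trunc j N (rep n s))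
       (fun j => sum_n (fun a => / INR j ^ s * zstar_trunc j m (rep a s) *
            zstar_trunc (S m) N (rep (n - a) s)) n) L m).
    2:{ intros. rewrite <- IHn by lia. unfold sum_n. rewrite <- sml.
        apply smext. intros; lra. }
    rewrite <- sum_swap.
    assert (E : sum_n (fun a => sum_n_m (fun j => / INR j ^ s * zstar_trunc j m (rep a s) *
            zstar_trunc (S m) N (rep (n - a) s)) L m) n =
            sum_n (fun a => zstar_trunc L m (rep (S a) s) * zstar_trunc (S m) N (rep (S n - S a) s)) n).
    { unfold sum_n. apply smext. intros. 
      change (zstar_trunc L m (rep (S k) s)) with
        (sum_n_m (fun j => / INR j ^ s * zstar_trunc j m (rep k s)) L m).
      now rewrite smr. }
    rewrite E.
    change (zstar_trunc (S m) N (rep (S n) s)) with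
      (sum_n_m (fun j => / INR j ^ s * zstar_trunc j N (rep n s)) (S m) N). lra.
Qed.

Lemma Fid s N m : (1 <= m <= N)%nat -> forall n,
  sum_n (fun a => zstar_trunc 1 m (rep a s) * zstar_trunc m N (rep (n - a) s)) n =
  sum_n (fun a => zstar_trunc 1 N (rep a s) * (/ INR m ^ s) ^ (n - a)) n.
Proof.
  intros Hm n. induction n.
  - rewrite !sn0. simpl. lra.
  - rewrite snS. rewrite Nat.sub_diag.
    unfold sum_n.
    rewrite (smext (fun a => zstar_trunc 1 m (rep a s) * zstar_trunc m N (rep (S n - a) s))
      (fun a => / INR m ^ s * (zstar_trunc 1 m (rep a s) * zstar_trunc m N (rep (n - a) s))
         + zstar_trunc 1 m (rep a s) * zstar_trunc (S m) N (rep (S n - a) s))).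
    2:{ intros. replace (S n - k)%nat with (S (n - k)) by lia.
        rewrite Erec by lia. lra. }
    rewrite smp, sml.
    fold (sum_n (fun a => zstar_trunc 1 m (rep a s) * zstar_trunc m N (rep (n - a) s)) n).
    rewrite IHn.
    pose proof (split_id s m N ltac:(lia) (S n) 1 ltac:(lia)) as Hs.
    rewrite snS, Nat.sub_diag in Hs. unfold sum_n in Hs.
    change (zstar_trunc (S m) N (rep 0 s)) with 1 in Hs.
    change (zstar_trunc m N (rep 0 s)) with 1.
    rewrite (smSm _ 0 n) by lia. rewrite Nat.sub_diag.
    rewrite (smext (fun a => zstar_trunc 1 N (rep a s) * (/ INR m ^ s) ^ (S n - a))
      (fun a => / INR m ^ s * (zstar_trunc 1 N (rep a s) * (/ INR m ^ s) ^ (n - a)))).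
    2:{ intros. replace (S n - k)%nat with (S (n - k)) by lia. simpl. lra. }
    rewrite sml. simpl (_ ^ 0). unfold sum_n in *. lra.
Qed.

Lemma powid (x : R) r s k : / x ^ r * (/ x ^ s) ^ k = / x ^ (s * k + r) * 1.
Proof.
  rewrite pow_inv, pow_add, <- pow_mult, Rinv_mult. lra.
Qed.

Lemma finite_id n s r N :
  sum_n (fun a => zstar_trunc 1 N (rep a s ++ r :: rep (n - a) s)) n =
  sum_n (fun a => zstar_trunc 1 N (rep a s) * zstar_trunc 1 N ((s * (n - a) + r)%nat :: nil)) n.
Proof.
  transitivity (sum_n (fun a => sum_n_m (fun j => zstar_trunc 1 j (rep a s) *
     (/ INR j ^ r * zstar_trunc j N (rep (n - a) s))) 1 N) n).
  { unfold sum_n. apply smext. intros. apply zconcat. }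
  rewrite sum_swap.
  rewrite (smext _ (fun j => sum_n (fun a => zstar_trunc 1 N (rep a s) *
     (/ INR j ^ r * (/ INR j ^ s) ^ (n - a))) n)).
  2:{ intros j Hj.
      transitivity (/ INR j ^ r * sum_n (fun a => zstar_trunc 1 j (rep a s) * zstar_trunc j N (rep (n - a) s)) n).
      { unfold sum_n. rewrite <- sml. apply smext. intros; lra. }
      rewrite Fid by lia. unfold sum_n. rewrite <- sml. apply smext. intros; lra. }
  rewrite <- sum_swap. unfold sum_n. apply smext. intros a _.
  rewrite sml. change (zstar_trunc 1 N ((s * (n - a) + r)%nat :: nil)) with (sum_n_m (fun j => / INR j ^ (s * (n - a) + r) * 1) 1 N). f_equal. apply smext. intros. now rewrite powid.
Qed.

Lemma term_nn j a : 0 <= / INR j ^ a.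
Proof.
  destruct j.
  - destruct a; simpl. lra. rewrite Rmult_0_l, Rinv_0. lra.
  - apply Rlt_le, Rinv_0_lt_compat, pow_lt. apply lt_0_INR. lia.
Qed.

Lemma sum_nn (f : nat -> R) n m : (forall k, 0 <= f k) -> 0 <= sum_n_m f n m.
Proof.
  intros H. replace 0 with (sum_n_m (fun _ => 0) n m).
  - apply sum_n_m_le. exact H.
  - exact (sum_n_m_const_zero (G:=R_AbelianMonoid) n m).
Qed.

Lemma z_nn l : forall m N, 0 <= zstar_trunc m N l.
Proof.
  induction l; intros; simpl. lra.
  apply sum_nn. intros. apply Rmult_le_pos. apply term_nn. apply IHl.
Qed.

Lemma z_mono l : forall m N, zstar_trunc m N l <= zstar_trunc m (S N) l.
Proof.
  induction l as [|x l IH]; intros; simpl. lra.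
  destruct (le_lt_dec m (S N)).
  - rewrite smSm by lia.
    apply Rle_trans with (sum_n_m (fun j => / INR j ^ x * zstar_trunc j (S N) l) m N).
    + apply sum_n_m_le. intros. apply Rmult_le_compat_l. apply term_nn. apply IH.
    + pose proof (Rmult_le_pos _ _ (term_nn (S N) x) (z_nn l (S N) (S N))). lra.
  - rewrite (smz _ m N), (smz _ m (S N)); try lra; lia.
Qed.

Lemma sq_bound x : (2 <= x)%nat -> forall N m,
  sum_n_m (fun j => / INR j ^ x) m N <= 2 - 2 / INR (S N).
Proof.
  intros Hx N. induction N; intros m.
  - destruct m.
    + rewrite smnn. simpl INR. destruct x. lia. simpl. rewrite Rmult_0_l, Rinv_0. lra.
    + rewrite smz by lia. simpl INR. lra.
  - destruct (le_lt_dec m (S N)).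
    + rewrite smSm by lia. specialize (IHN m).
      assert (Ht : / INR (S N) ^ x <= / INR (S N) ^ 2).
      { apply Rinv_le_contravar. apply pow_lt. apply lt_0_INR; lia.
        apply Rle_pow. apply (le_INR 1). lia. lia. }
      rewrite (S_INR (S N)) in *. rewrite S_INR in *.
      pose proof (pos_INR N) as HN. set (y := INR N) in *.
      assert (2 - 2 / (y + 1) + / (y + 1) ^ 2 <= 2 - 2 / (y + 1 + 1)).
      { assert (E : 2 / (y+1) - 2 / (y + 1 + 1) - / (y + 1) ^ 2 = y / ((y+1)^2 * (y+2))).
        { field. lra. }
        assert (0 <= y / ((y+1)^2 * (y+2))).
        { apply Rmult_le_pos. lra. apply Rlt_le, Rinv_0_lt_compat.
          apply Rmult_lt_0_compat. apply pow_lt. lra. lra. }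
        lra. }
      lra.
    + rewrite smz by lia. assert (1 <= INR (S (S N))) by (apply (le_INR 1); lia).
      assert (/ INR (S (S N)) <= 1) by (rewrite <- Rinv_1; apply Rinv_le_contravar; lra).
      unfold Rdiv; lra.
Qed.

Definition ge2 (x : nat) : Prop := (2 <= x)%nat.

Lemma z_bound l : List.Forall ge2 l -> forall m N, zstar_trunc m N l <= 2 ^ length l.
Proof.
  induction l as [|x l IH]; intros Hl m N; simpl. lra.
  inversion Hl; subst.
  apply Rle_trans with (sum_n_m (fun j => / INR j ^ x) m N * 2 ^ length l).
  - rewrite <- smr. apply sum_n_m_le. intros. apply Rmult_le_compat_l. apply term_nn.
    apply IH; auto.
  - pose proof (sq_bound x H1 N m). pose proof (pow_lt 2 (length l) ltac:(lra)).
    assert (0 <= 2 / INR (S N)). { apply Rlt_le, Rdiv_lt_0_compat. lra. apply lt_0_INR; lia. }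
    nra.
Qed.

Lemma z_lim l : List.Forall ge2 l -> is_lim_seq (fun N => zstar_trunc 1 N l) (zeta_star l).
Proof.
  intros Hl.
  destruct (ex_finite_lim_seq_incr (fun N => zstar_trunc 1 N l) (2 ^ length l)) as [L HL].
  - intros. apply z_mono.
  - intros. apply z_bound; auto.
  - unfold zeta_star. rewrite (is_lim_seq_unique _ _ HL). exact HL.
Qed.

Lemma rz_eq e : riemann_zeta e = zeta_star (e :: nil).
Proof.
  unfold riemann_zeta, Series, zeta_star.
  rewrite <- (Lim_seq_incr_1 (fun N => zstar_trunc 1 N (e :: nil))).
  f_equal. apply Lim_seq_ext. intros N. simpl zstar_trunc.
  unfold sum_n. rewrite <- smS. apply smext. intros; lra.
Qed.

Lemma lim_sum (f : nat -> nat -> R) (L : nat -> R) n :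
  (forall a, is_lim_seq (fun N => f a N) (L a)) ->
  is_lim_seq (fun N => sum_n (fun a => f a N) n) (sum_n L n).
Proof.
  intros H. induction n.
  - rewrite sn0. eapply is_lim_seq_ext. 2: apply H. intros; now rewrite sn0.
  - rewrite snS. eapply is_lim_seq_ext. 2: apply is_lim_seq_plus'; [apply IHn | apply H].
    intros; now rewrite snS.
Qed.

Lemma Forall_rep a s : (2 <= s)%nat -> List.Forall ge2 (rep a s).
Proof. intros. apply List.Forall_forall. intros x Hx. unfold rep in Hx.
  apply repeat_spec in Hx. subst. exact H. Qed.

Theorem proposition4p1 (n s r : nat) (hs : (2 <= s)%nat) (hr : (2 <= r)%nat) :
  sum_n (fun a => zeta_star (rep a s) * riemann_zeta (s * (n - a) + r)) n =
  sum_n (fun a => zeta_star (rep a s ++ r :: rep (n - a) s)) n.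
Proof.
  assert (H1 : is_lim_seq (fun N => sum_n (fun a => zstar_trunc 1 N (rep a s) *
      zstar_trunc 1 N ((s * (n - a) + r)%nat :: nil)) n)
      (sum_n (fun a => zeta_star (rep a s) * riemann_zeta (s * (n - a) + r)) n)).
  { apply (lim_sum (fun a N => zstar_trunc 1 N (rep a s) *
      zstar_trunc 1 N ((s * (n - a) + r)%nat :: nil))).
    intros a. rewrite rz_eq. apply is_lim_seq_mult'; apply z_lim.
    - apply Forall_rep; auto.
    - constructor. unfold ge2. nia. constructor. }
  assert (H2 : is_lim_seq (fun N => sum_n (fun a => zstar_trunc 1 N (rep a s ++ r :: rep (n - a) s)) n)
      (sum_n (fun a => zeta_star (rep a s ++ r :: rep (n - a) s)) n)).
  { apply (lim_sum (fun a N => zstar_trunc 1 N (rep a s ++ r :: rep (n - a) s))).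
    intros a. apply z_lim. apply List.Forall_app. split. apply Forall_rep; auto.
    constructor; auto. apply Forall_rep; auto. }
  eapply is_lim_seq_ext in H2. 2:{ intros N. apply finite_id. }
  apply is_lim_seq_unique in H1. apply is_lim_seq_unique in H2.
  rewrite H1 in H2. injection H2. auto.
Qed.
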